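(* Let $R=(S^0,\dots,S^T)$ be any $T$-covering in a symmetric congestion game in which every delay function is $f(x)=x$, and assume $\mathrm{OPT}>0$. Then $$\frac{C(S^T)}{\mathrm{OPT}}\le(2+2\sqrt2)\sqrt{\frac{C(S^0)}{\mathrm{OPT}}}.$$
   Context: A congestion game has players $N=\{1,\dots,n\}$, a finite resource set $E$ and strategy sets $\Sigma_i\subseteq 2^E$; it is symmetric if all $\Sigma_i$ equal a common set $\Sigma$. For a profile $S=(s_1,\dots,s_n)$, $n_e(S)=|\{i:e\in s_i\}|$. Here all delays are $f(x)=x$, so $c_i(S)=\sum_{e\in s_i}n_e(S)$ and $C(S)=\sum_i c_i(S)=\sum_{e\in E}n_e(S)^2$; $\mathrm{OPT}=\min_S C(S)$. A best response of player $i$ in $S$ is a strategy $s_i^b\in\Sigma_i$ minimizing $c_i(S_{-i},\cdot)$ (where $(S_{-i},s_i')$ replaces $s_i$ by $s_i'$); if no strategy strictly decreases $i$'s cost, the best response is $s_i$ itself. A $T$-covering is a sequence of profiles $R=(S^0,\dots,S^T)$ with players $\pi(1),\dots,\pi(T)$ such that for each $1\le t\le T$, $S^t=(S^{t-1}_{-\pi(t)},s')$ with $s'$ a best response of $\pi(t)$ in $S^{t-1}$, and every player occurs at least once among $\pi(1),\dots,\pi(T)$. *)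

(* Defs.v *)
From mathcomp Require Import all_boot all_order all_algebra.
Set Implicit Arguments. Unset Strict Implicit. Unset Printing Implicit Defensive.

Section Game.
Variables (E : finType) (n : nat).

Definition profile := 'I_n -> {set E}.

Definition valid (Sigma : {set {set E}}) (S : profile) : Prop :=
  forall i, S i \in Sigma.

Definition load (S : profile) (e : E) : nat := #|[set i | e \in S i]|.

(* c_i(S) = sum_{e in s_i} n_e(S)   (delay f(x) = x) *)
Definition cost (S : profile) (i : 'I_n) : nat := \sum_(e in S i) load S e.

Definition social_cost (S : profile) : nat := \sum_(i < n) cost S i.

Definition upd (S : profile) (i : 'I_n) (s' : {set E}) : profile :=
  fun j => if j == i then s' else S j.

Definition is_OPT (Sigma : {set {set E}}) (opt : nat) : Prop :=
  (exists S, valid Sigma S /\ social_cost S = opt) /\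
  (forall S, valid Sigma S -> opt <= social_cost S).

Definition best_response (Sigma : {set {set E}}) (S : profile) (i : 'I_n)
    (s' : {set E}) : Prop :=
  [/\ s' \in Sigma,
      (forall s, s \in Sigma -> cost (upd S i s') i <= cost (upd S i s) i)
    & ((forall s, s \in Sigma -> cost S i <= cost (upd S i s) i) -> s' = S i)].

Definition T_covering (Sigma : {set {set E}}) (T : nat)
    (R : nat -> profile) (pi : nat -> 'I_n) : Prop :=
  [/\ valid Sigma (R 0),
      (forall t, 1 <= t <= T ->
         exists s', best_response Sigma (R t.-1) (pi t) s' /\
                    R t = upd (R t.-1) (pi t) s')
    & (forall i : 'I_n, exists t, 1 <= t <= T /\ pi t = i)].

End Game.

(* Main.v *)
Require Import Defs.
From mathcomp Require Import all_boot all_order all_algebra.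
From mathcomp Require Import zify ring lra.
From Stdlib Require Import FunctionalExtensionality.
Import Order.TTheory GRing.Theory Num.Theory.
Set Implicit Arguments. Unset Strict Implicit. Unset Printing Implicit Defensive.

Section H.
Variables (E : finType) (n : nat).
Implicit Types (S : profile E n) (i j : 'I_n) (s : {set E}) (e : E).

Lemma loadE S e : load S e = \sum_j nat_of_bool (e \in S j).
Proof.
rewrite /load -sum1_card big_mkcond /=; apply: eq_bigr => j _.
by rewrite inE; case: (e \in S j).
Qed.

Lemma costE S i : cost S i = \sum_e nat_of_bool (e \in S i) * load S e.
Proof.
rewrite /cost big_mkcond /=; apply: eq_bigr => e _.
by case: (e \in S i); rewrite ?mul1n ?mul0n.
Qed.

Definition oth S i e := \sum_(j | j != i) nat_of_bool (e \in S j).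

Lemma load_split S i e : load S e = (e \in S i) + oth S i e.
Proof. by rewrite loadE (bigD1 i). Qed.

Lemma upd_ii S i s : upd S i s i = s.
Proof. by rewrite /upd eqxx. Qed.

Lemma upd_ne S i s j : j != i -> upd S i s j = S j.
Proof. by rewrite /upd => /negbTE ->. Qed.

Lemma oth_upd S i s e : oth (upd S i s) i e = oth S i e.
Proof. by apply: eq_bigr => j /upd_ne ->. Qed.

Lemma load_upd S i s e : load (upd S i s) e = (e \in s) + oth S i e.
Proof. by rewrite (load_split (upd S i s) i) upd_ii oth_upd. Qed.

Lemma upd_id S i : upd S i (S i) = S.
Proof.
apply: functional_extensionality => j; rewrite /upd.
by case: eqP => // ->.
Qed.

Definition phi S := \sum_e load S e * (load S e).+1.
Lemma phiE S : phi S = \sum_e load S e * (load S e).+1.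
Proof. by []. Qed.

Lemma phi_split S i :
  phi S = \sum_e oth S i e * (oth S i e).+1 + 2 * cost S i.
Proof.
rewrite phiE (costE S i) big_distrr -big_split; apply: eq_bigr => e _ /=.
rewrite (load_split S i); case: (e \in S i) => /=; nia.
Qed.

Lemma phi_upd S i s :
  phi (upd S i s) = \sum_e oth S i e * (oth S i e).+1 + 2 * cost (upd S i s) i.
Proof. by rewrite (phi_split (upd S i s) i); under eq_bigr do rewrite oth_upd. Qed.

Lemma cost_upd_le S i s : cost (upd S i s) i <= \sum_(e in s) (load S e).+1.
Proof.
rewrite /cost upd_ii; apply: leq_sum => e es.
rewrite load_upd (load_split S i) es; case: (e \in S i) => /=; lia.
Qed.

Lemma socE S : social_cost S = \sum_(i < n) cost S i.
Proof. by []. Qed.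

Lemma social_sq S : social_cost S = \sum_e load S e * load S e.
Proof.
rewrite socE (eq_bigr _ (fun i _ => costE S i)).
rewrite exchange_big; apply: eq_bigr => e _ /=.
by rewrite -big_distrl /= -loadE.
Qed.

Lemma sq_le_phi S : \sum_e load S e * load S e <= phi S.
Proof. by rewrite phiE; apply: leq_sum => e _; apply: leq_mul. Qed.

Lemma phi_le S : phi S <= 2 * \sum_e load S e * load S e.
Proof.
rewrite phiE big_distrr; apply: leq_sum => e _ /=.
case: (load S e) => [|k] //; nia.
Qed.

Lemma costE2 S i : cost S i =
  \sum_j \sum_e nat_of_bool (e \in S i) * nat_of_bool (e \in S j).
Proof.
rewrite (costE S i) (eq_bigr _ (fun e _ => congr1 (muln _) (loadE S e))).
rewrite (eq_bigr _ (fun e _ => big_distrr _ _ _)) /=.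
by rewrite exchange_big.
Qed.

End H.
Section Dyn.
Variables (E : finType) (n : nat) (Sigma : {set {set E}}) (T : nat)
  (Sq : nat -> profile E n) (pi : nat -> 'I_n).
Hypothesis cov : T_covering Sigma T Sq pi.

Lemma step t : 1 <= t <= T -> exists s',
  best_response Sigma (Sq t.-1) (pi t) s' /\ Sq t = upd (Sq t.-1) (pi t) s'.
Proof. by case: cov => _ H _; apply: H. Qed.

Lemma valid_all t : t <= T -> valid Sigma (Sq t).
Proof.
elim: t => [|t IH] ht; first by case: cov.
have h1 : 1 <= t.+1 <= T by rewrite ht.
have [s' [[s'S _ _] ->]] := step h1.
move=> j; rewrite /upd; case: eqP => _ //.
by apply: IH; apply: ltnW.
Qed.

Lemma stable j t : t <= T -> (forall t', t < t' <= T -> pi t' != j) ->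
  Sq t j = Sq T j.
Proof.
move=> tT H.
suff K : forall k, t + k <= T -> Sq (t + k) j = Sq t j.
  by rewrite -(K (T - t)) ?subnKC.
elim=> [|k IH] hk; first by rewrite addn0.
have h1 : 1 <= (t + k.+1) <= T by rewrite hk; lia.
have [s' [_ ->]] := step h1.
rewrite upd_ne; last by rewrite eq_sym; apply: H; lia.
by rewrite addnS /= IH //; lia.
Qed.

Lemma phi_dec t : t <= T -> phi (Sq t) <= phi (Sq 0).
Proof.
elim: t => [|t IH] ht //.
have h1 : 1 <= t.+1 <= T by rewrite ht.
have [s' [[s'S br _] ->]] := step h1.
apply: leq_trans (IH (ltnW ht)).
rewrite /= (phi_upd (Sq t) (pi t.+1) s') (phi_split (Sq t) (pi t.+1)).
rewrite leq_add2l leq_mul2l /=.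
have := br (Sq t (pi t.+1)) (valid_all (ltnW ht) _).
by rewrite upd_id.
Qed.

Lemma sq_bound t : t <= T ->
  \sum_e load (Sq t) e * load (Sq t) e <= 2 * social_cost (Sq 0).
Proof.
move=> tT; apply: leq_trans (sq_le_phi _) _.
apply: leq_trans (phi_dec tT) _.
by rewrite social_sq; apply: phi_le.
Qed.

Definition lastm (i : 'I_n) := \max_(t < T.+1 | pi t == i) t.

Lemma lastm_spec i : [/\ 1 <= lastm i <= T, pi (lastm i) = i &
   forall t', lastm i < t' <= T -> pi t' != i].
Proof.
case: cov => _ _ /(_ i) [t0 [/andP [t01 t0T] pt0]].
have t0o : t0 < T.+1 by [].
have A : 0 < #|[pred t : 'I_T.+1 | pi t == i]|.
  apply/card_gt0P; exists (Ordinal t0o); by rewrite inE /= pt0.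
have [i0 Hi0 Heq] := eq_bigmax_cond (fun t : 'I_T.+1 => nat_of_ord t) A.
have le0 : t0 <= lastm i.
  by apply: (@leq_bigmax_cond _ (fun t : 'I_T.+1 => pi t == i) (fun t : 'I_T.+1 => nat_of_ord t) (Ordinal t0o)) => /=; rewrite pt0.
have Eq : lastm i = i0 by rewrite /lastm Heq.
split.
- rewrite Eq; apply/andP; split; [by rewrite -Eq; lia | by rewrite -ltnS].
- by rewrite Eq; apply/eqP; move: Hi0; rewrite inE.
- move=> t' /andP [lt tT]; apply/negP => /eqP pt.
  have t'o : t' < T.+1 by [].
  have : t' <= lastm i.
    by apply: (@leq_bigmax_cond _ (fun t : 'I_T.+1 => pi t == i) (fun t : 'I_T.+1 => nat_of_ord t) (Ordinal t'o)) => /=; rewrite pt.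
  lia.
Qed.

Lemma N1 : social_cost (Sq T) <= 2 * \sum_i cost (Sq (lastm i)) i.
Proof.
have F1 i : Sq (lastm i) i = Sq T i.
  by case: (lastm_spec i) => /andP [_ h] _ H; apply: stable.
have F2 i j : lastm j < lastm i -> Sq (lastm i) j = Sq T j.
  move=> lt; case: (lastm_spec i) => /andP [_ h] _ _; apply: stable => // t' /andP [h1 h2].
  by case: (lastm_spec j) => _ _ -> //; rewrite h2 andbT; apply: ltn_trans h1.
rewrite socE (eq_bigr _ (fun i _ => costE2 (Sq T) i)).
rewrite (eq_bigr _ (fun i _ => costE2 (Sq (lastm i)) i)).
set H := fun i j => \sum_e nat_of_bool (e \in Sq (lastm i) i) * nat_of_bool (e \in Sq (lastm i) j).
have -> : 2 * (\sum_i \sum_j H i j) = \sum_i \sum_j (H i j + H j i).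
  rewrite mul2n -addnn [X in _ + X = _]exchange_big -big_split; apply: eq_bigr => i _.
  by rewrite -big_split.
apply: leq_sum => i _; apply: leq_sum => j _.
case: (eqVneq i j) => [<-|ij].
  by rewrite /H F1 leq_addr.
have fij : lastm i != lastm j.
  by apply: contra ij => /eqP e; case: (lastm_spec i) => _ <- _; case: (lastm_spec j) => _ <- _; rewrite e.
case: (ltngtP (lastm j) (lastm i)) => [lt|lt|eq]; last by rewrite eq eqxx in fij.
  by rewrite /H (F1 i) (F2 i j) // leq_addr.
rewrite /H (F1 j) (F2 j i) //.
rewrite [X in X <= _](eq_bigr (fun e => nat_of_bool (e \in Sq T j) * nat_of_bool (e \in Sq T i))).
  exact: leq_addl.
by move=> e _; rewrite mulnC.
Qed.

Lemma N2 (O : profile E n) i : valid Sigma O ->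
  n * cost (Sq (lastm i)) i <=
  \sum_e load O e * load (Sq (lastm i).-1) e + social_cost O.
Proof.
move=> vO.
have [ht pt _] := lastm_spec i.
have [s' [[s'S br _] ->]] := step ht.
move: br; rewrite pt => br; set S := Sq (lastm i).-1.
have c_le j : cost (upd S i s') i <= \sum_(e in O j) (load S e).+1.
  have := cost_upd_le S i (O j); have := br _ (vO j); move=> h1 h2. exact (leq_trans h1 h2).
have -> : n * cost (upd S i s') i = \sum_(j < n) cost (upd S i s') i.
  by rewrite sum_nat_const card_ord.
apply: (@leq_trans (\sum_j \sum_(e in O j) (load S e).+1)); first by apply: leq_sum => j _; exact: c_le.
have -> : \sum_j \sum_(e in O j) (load S e).+1 = \sum_e load O e * (load S e).+1.
  rewrite (eq_bigr _ (fun j _ => big_mkcond _ _)) /= exchange_big.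
  apply: eq_bigr => e _ /=.
  rewrite (loadE O e) big_distrl /=; apply: eq_bigr => j _.
  by case: (e \in O j); rewrite ?mul1n ?mul0n.
rewrite (eq_bigr _ (fun e _ => mulnSr _ _)) big_split /= leq_add2l social_sq.
apply: leq_sum => e _; case: (load O e) => // k; exact: leq_pmulr.
Qed.

End Dyn.

Local Open Scope ring_scope.

Lemma lerT (R : numDomainType) (x y z : R) : x <= y -> y <= z -> x <= z.
Proof. exact: le_trans. Qed.

Theorem lemma6 (R : rcfType) (E : finType) (n : nat) (Sigma : {set {set E}})
    (T : nat) (Sq : nat -> profile E n) (pi : nat -> 'I_n) (opt : nat) :
  T_covering Sigma T Sq pi ->
  is_OPT n Sigma opt ->
  (0 < opt)%N ->
  (social_cost (Sq T))%:R / opt%:R <=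
    (2 + 2 * Num.sqrt 2) * Num.sqrt ((social_cost (Sq 0%N))%:R / opt%:R :> R).
Proof.
move=> cov [[O [vO Oc]] Omin] opt0.
have v0 : valid Sigma (Sq 0%N) by case: cov.
have bp : (opt <= social_cost (Sq 0%N))%N := Omin _ v0.
have n0 : (0 < n)%N.
  case: (pickP (fun _ : 'I_n => true)) => [i0 _|P0]; first exact: (leq_ltn_trans (leq0n _) (ltn_ord i0)).
  by move: opt0; rewrite -Oc socE big_pred0.
set pR : R := opt%:R; set bR : R := (social_cost (Sq 0%N))%:R.
set aR : R := (social_cost (Sq T))%:R.
set q := Num.sqrt (bR / pR); set r : R := Num.sqrt 2.
have pR0 : 0 < pR by rewrite ltr0n.
have bpR : pR <= bR by rewrite ler_nat.
have q0 : 0 <= q by apply: sqrtr_ge0.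
have r0 : 0 <= r by apply: sqrtr_ge0.
have hq2 : q ^+ 2 = bR / pR by rewrite sqr_sqrtr // divr_ge0 // ltW // (lt_le_trans pR0).
have hr2 : r ^+ 2 = 2 by rewrite sqr_sqrtr.
have hb : bR = q ^+ 2 * pR by rewrite hq2 divfK // gt_eqF.
have hq1 : 1 <= q.
  have : 1 <= q ^+ 2 by rewrite hq2 ler_pdivlMr // mul1r.
  by nra.
have r1 : 0 < r by rewrite sqrtr_gt0.
have key i : (n * cost (Sq (lastm T pi i)) i)%:R <= r * q * pR + pR.
  have h1 := N2 cov i vO; rewrite Oc in h1.
  have [/andP [_ hT] _ _] := lastm_spec cov i.
  have h2 := sq_bound cov (leq_trans (leq_pred _) hT).
  have h3 : (\sum_e load O e * load O e)%N = opt by rewrite -social_sq.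
  set x := fun e => load (Sq (lastm T pi i).-1) e.
  apply: (@lerT _ _ ((\sum_e load O e * x e)%N%:R + pR)); first by rewrite -natrD ler_nat.
  rewrite lerD2r.
  have per e : 2 * r * q * ((load O e)%:R * (x e)%:R) <=
      2 * q ^+ 2 * ((load O e)%:R * (load O e)%:R) + (x e)%:R * (x e)%:R.
    rewrite -subr_ge0.
    have -> : 2 * q ^+ 2 * ((load O e)%:R * (load O e)%:R) + (x e)%:R * (x e)%:R
       - 2 * r * q * ((load O e)%:R * (x e)%:R) = (r * q * (load O e)%:R - (x e)%:R) ^+ 2
         + (2 - r ^+ 2) * q ^+ 2 * ((load O e)%:R * (load O e)%:R) :> R.
      by ring.
    by rewrite hr2 subrr !mul0r addr0 sqr_ge0.
  have S1 : 2 * r * q * (\sum_e ((load O e)%:R * (x e)%:R)) <=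
      2 * q ^+ 2 * (\sum_e ((load O e)%:R * (load O e)%:R)) + \sum_e ((x e)%:R * (x e)%:R) :> R.
    rewrite !mulr_sumr -big_split /=; apply: ler_sum => e _; exact: per.
  have E1 : (\sum_e load O e * x e)%N%:R = \sum_e ((load O e)%:R * (x e)%:R) :> R.
    by rewrite natr_sum; apply: eq_bigr => e _; rewrite natrM.
  have E2 : \sum_e ((load O e)%:R * (load O e)%:R) = pR :> R.
    by rewrite /pR -h3 natr_sum; apply: eq_bigr => e _; rewrite natrM.
  have E3 : \sum_e ((x e)%:R * (x e)%:R) <= 2 * bR :> R.
    have -> : \sum_e ((x e)%:R * (x e)%:R) = (\sum_e x e * x e)%N%:R :> R.
      by rewrite natr_sum; apply: eq_bigr => e _; rewrite natrM.
    by rewrite /bR -natrM ler_nat.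
  rewrite E1; rewrite E2 in S1.
  set X := \sum_e _ in S1 *.
  have S2 : (2 * r * q) * X <= (2 * r * q) * (r * q * pR).
    apply: (lerT S1).
    have -> : (2 * r * q) * (r * q * pR) = 2 * q ^+ 2 * pR + 2 * bR.
      rewrite hb; have -> : (2 * r * q) * (r * q * pR) = 2 * r ^+ 2 * q ^+ 2 * pR by ring.
      rewrite hr2; ring.
    by rewrite lerD2l.
  rewrite ler_pM2l in S2 => //.
  by rewrite !mulr_gt0 // (lt_le_trans ltr01 hq1).
have sumc : (\sum_i cost (Sq (lastm T pi i)) i)%N%:R <= r * q * pR + pR.
  have nR : 0 < (n%:R : R) by rewrite ltr0n.
  rewrite -(ler_pM2l nR) -natrM big_distrr /= natr_sum.
  apply: (@lerT _ _ (\sum_(i < n) (r * q * pR + pR))).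
    by apply: ler_sum => i _; exact: key.
  by rewrite sumr_const card_ord mulr_natl.
have aN := N1 cov.
have aR2 : aR <= 2 * (r * q * pR + pR).
  apply: (@lerT _ _ (2 * (\sum_i cost (Sq (lastm T pi i)) i)%N%:R)).
    by rewrite /aR -natrM ler_nat.
  by rewrite ler_pM2l.
rewrite ler_pdivrMr //.
apply: (lerT aR2).
nra.
Qed.
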